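(* Let $S$ be a semiring satisfying the standing assumptions below. Every basis $\{\beta_1,\dots,\beta_n\}$ of $S^n$ consists of vectors each of which has exactly one nonzero entry, and that nonzero entry is a unit of $S$; that is, each $\beta_i$ is of the form $(0,\dots,0,a_i,0,\dots,0)$ with $a_i \in U(S)$.
   Context: A semiring $(S,+,\cdot)$ here means: $(S,+)$ is a commutative monoid with zero $0$, $(S,\cdot)$ is a commutative monoid with identity $1$, multiplication distributes over addition, and $0$ is absorbing. Standing assumptions on $S$: $S$ is additively idempotent ($a+a=a$), multiplicatively cancellative (for every nonzero $a$, $ba=ca$ implies $b=c$), and additively unit irreducible (if $a+b$ is a unit then $a$ or $b$ is a unit). $U(S)$ is the set of units of $S$. $S^n$ is the semimodule of all $1\times n$ matrices over $S$ (componentwise addition and scalar multiplication). A set $D$ is linearly independent if no $x\in D$ lies in the set of finite $S$-linear combinations of $D\setminus\{x\}$; a basis is a linearly independent spanning set. *)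

(* Defs.v *)
From HB Require Import structures.
From mathcomp Require Import all_boot all_order all_algebra.
Set Implicit Arguments. Unset Strict Implicit. Unset Printing Implicit Defensive.
Import GRing.Theory.
Local Open Scope ring_scope.

(* Commutative semiring (0 absorbing, commutative +, commutative * with 1):
   a MathComp comPzSemiRingType (possibly trivial). *)

Definition sr_unit (S : comPzSemiRingType) (a : S) : Prop := exists b : S, a * b = 1.

Definition add_idempotent (S : comPzSemiRingType) : Prop := forall a : S, a + a = a.

Definition mul_cancellative (S : comPzSemiRingType) : Prop :=
  forall a b c : S, a != 0 -> b * a = c * a -> b = c.

Definition add_unit_irreducible (S : comPzSemiRingType) : Prop :=
  forall a b : S, sr_unit (a + b) -> sr_unit a \/ sr_unit b.

Definition in_span (S : comPzSemiRingType) (n : nat) (D : 'rV[S]_n -> Prop)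
    (v : 'rV[S]_n) : Prop :=
  exists (l : seq 'rV[S]_n) (c : nat -> S),
    (forall x, x \in l -> D x) /\ v = \sum_(i < size l) c i *: nth 0 l i.

Definition lin_indep (S : comPzSemiRingType) (n : nat) (D : 'rV[S]_n -> Prop) : Prop :=
  forall x, D x -> ~ in_span (fun y => D y /\ y <> x) x.

Definition is_basis (S : comPzSemiRingType) (n : nat) (D : 'rV[S]_n -> Prop) : Prop :=
  lin_indep D /\ forall v, in_span D v.

(* Main.v *)
Require Import Defs.
From HB Require Import structures.
From mathcomp Require Import all_boot all_order all_algebra.
From Stdlib Require Import ClassicalEpsilon.
Set Implicit Arguments. Unset Strict Implicit. Unset Printing Implicit Defensive.
Import GRing.Theory.
Local Open Scope ring_scope.

Section Aux.
Variable S : comPzSemiRingType.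
Hypothesis Hidem : add_idempotent S.

Lemma zsf (a b : S) : a + b = 0 -> a = 0.
Proof. by move=> h; rewrite -[a]addr0 -h addrA Hidem. Qed.

Lemma zsf_sum (I : finType) (F : I -> S) : \sum_i F i = 0 -> forall i, F i = 0.
Proof. move=> h i; rewrite (bigD1 i) //= in h; exact: zsf h. Qed.

Lemma unit_mull (a b : S) : sr_unit (a * b) -> sr_unit a /\ sr_unit b.
Proof.
case=> c h; split; first by exists (b * c); rewrite mulrA.
by exists (a * c); rewrite mulrCA mulrA.
Qed.

Hypothesis Hirr : add_unit_irreducible S.
Hypothesis nt : (1 : S) != 0.

Lemma unit_sum (m : nat) (F : 'I_m -> S) :
  sr_unit (\sum_(i < m) F i) -> exists i, sr_unit (F i).
Proof.
elim: m F => [|m IH] F.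
  by rewrite big_ord0 => -[b]; rewrite mul0r => h; move: nt; rewrite h eqxx.
rewrite big_ord_recr /= => /Hirr [/(IH (fun i => F (widen_ord (leqnSn m) i))) [i hi]|h].
  by exists (widen_ord (leqnSn m) i).
by exists ord_max.
Qed.
End Aux.

Theorem corollary2p5 (S : comPzSemiRingType) (n : nat)
  (Hidem : add_idempotent S) (Hcanc : mul_cancellative S)
  (Hirr : add_unit_irreducible S)
  (beta : 'I_n -> 'rV[S]_n) (Hinj : injective beta)
  (Hbasis : is_basis (fun v => exists i, v = beta i)) :
  forall i : 'I_n, exists j : 'I_n,
    beta i 0 j != 0 /\ sr_unit (beta i 0 j) /\
    (forall k : 'I_n, k != j -> beta i 0 k = 0).
Proof.
move=> i0.
case: Hbasis => Hli Hsp.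
have nt : (1 : S) != 0.
  apply/negP => /eqP h10.
  have z : forall a : S, a = 0 by move=> a; rewrite -[a]mulr1 h10 mulr0.
  apply: (Hli (beta i0)); first by exists i0.
  exists [::], (fun _ => 0); split => //.
  by apply/matrixP => a b; rewrite (z (beta i0 a b)) (z (_ a b)).
have key : forall k : 'I_n, exists i : 'I_n, sr_unit (beta i 0 k) /\
    forall k', k' != k -> beta i 0 k' = 0.
  move=> k.
  have [l [c [Hl He]]] := Hsp (\row_j ((j == k)%:R)).
  have e1 := congr1 (fun M : 'rV[S]_n => M 0 k) He; rewrite /= mxE eqxx summxE in e1.
  have hs : sr_unit (\sum_(m < size l) (c m * l`_m 0 k)).
    by exists 1; rewrite mulr1 -[1]/(true%:R) e1; apply: eq_bigr => m _; rewrite mxE.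
  have [m hm] := unit_sum Hirr nt hs.
  have [[d hc] hb] := unit_mull hm.
  have [i hi] := Hl _ (mem_nth 0 (ltn_ord m)).
  exists i; rewrite -hi; split => // k' hk'.
  have e2 := congr1 (fun M : 'rV[S]_n => M 0 k') He; rewrite /= mxE summxE (negbTE hk') in e2.
  have := zsf_sum Hidem (esym e2) m; rewrite mxE => h0.
  by rewrite -[_ 0 k']mul1r -hc -mulrA (mulrC d) mulrA h0 mul0r.
have [sig Hsig] : exists sig : 'I_n -> 'I_n, forall k, sr_unit (beta (sig k) 0 k) /\
    forall k', k' != k -> beta (sig k) 0 k' = 0.
  exists (fun k => proj1_sig (constructive_indefinite_description _ (key k))).
  move=> k; exact: proj2_sig (constructive_indefinite_description _ (key k)).
have unz : forall a : S, sr_unit a -> a != 0.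
  move=> a [b hb]; apply/negP => /eqP ha; move: nt; by rewrite -hb ha mul0r eqxx.
have sinj : injective sig.
  move=> k k' e; case: (eqVneq k k') => // hk; exfalso.
  have [u _] := Hsig k; have [_ z] := Hsig k'.
  by move: (unz _ u); rewrite e z ?eqxx.
have [g gK Kg] := injF_bij sinj.
exists (g i0); have [u z] := Hsig (g i0); rewrite Kg in u z.
by split; [exact: unz | split].
Qed.
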